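(* Let $n$ be a positive integer and $g=3n+1$. The map $\sigma$ sends $\mathcal{G}_{2n}(g,q\le3)$ into $\mathcal{C}_{2n+1}(g+1)$ and is injective on $\mathcal{G}_{2n}(g,q\le 3)$. Moreover: (i) if $G\in\mathcal{G}_{2n}(g)$ has depth $2$ and multiplicity $m$, then $\sigma(G)$ is an $(m+1)$-set of depth $2$; (ii) if $G\in\mathcal{G}_{2n}(g)$ has depth $3$ and multiplicity $m$, then $\sigma(G)$ is an $(m+1)$-set of depth $3$.
   Context: A gapset is a finite set $G\subset\mathbb{N}=\{1,2,\dots\}$ such that whenever $z\in G$ and $z=x+y$ with $x,y\in\mathbb{N}$, then $x\in G$ or $y\in G$; its genus is $\#G$. Write $G=\{\ell_1<\dots<\ell_g\}$. Multiplicity $m(G)=\min\{s\in\mathbb{N}:s\notin G\}$; conductor $c(G)=\min\{s\in\mathbb{N}: s+t\notin G\ \forall t\in\mathbb{N}_0\}$; depth $q(G)=\lceil c(G)/m(G)\rceil$. $G$ is pure $\kappa$-sparse if $\ell_{i+1}-\ell_i\le\kappa$ for all $i$ with equality for some $i$; $\mathcal{G}_\kappa(g)$ is the set of pure $\kappa$-sparse gapsets of genus $g$ and $\mathcal{G}_\kappa(g,q\le3)$ those of depth at most $3$. $\mathcal{C}_\kappa(g)$ is the set of subsets of $[1,2g-1]$ with exactly $g$ elements whose maximum difference between consecutive elements (in increasing order) is exactly $\kappa$. For a positive integer $m$, an $m$-set is a set $M\subset\mathbb{N}$ with $[1,m-1]\subseteq M$ and $M\cap m\mathbb{N}=\emptyset$;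 its depth is $\lceil c/m\rceil$ where $c=\max M$. For $G\in\mathcal{G}_{2n}(g)$ let $\alpha=\max\{i:\ell_{i+1}-\ell_i=2n\}$ and $\sigma(G)=\{1\}\cup\{\ell_i+1:1\le i\le\alpha\}\cup\{\ell_i+2:\alpha+1\le i\le g\}$. *)

(* Defs.v *)
From mathcomp Require Import all_boot all_order.
From mathcomp Require Import finmap.
Set Implicit Arguments. Unset Strict Implicit. Unset Printing Implicit Defensive.
Local Open Scope fset_scope.
Local Open Scope nat_scope.

(* Finite subsets of N are modelled as G : {fset nat}; N = {1,2,...}, so
   membership in N is enforced by requiring 0 \notin G where relevant. *)

Definition is_gapset (G : {fset nat}) : Prop :=
  0 \notin G /\
  forall z x y, z \in G -> 0 < x -> 0 < y -> z = x + y -> x \in G \/ y \in G.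

Definition genus (G : {fset nat}) : nat := #|` G|.

(* increasing enumeration, and 1-indexed elements l_1 < ... < l_g *)
Definition elts (G : {fset nat}) : seq nat := sort leq (enum_fset G).
Definition ell (G : {fset nat}) (i : nat) : nat := nth 0 (elts G) i.-1.

Definition fmax (G : {fset nat}) : nat := \max_(x <- enum_fset G) x.

(* multiplicity: least s >= 1 not in G (max G + 1 is never in G) *)
Definition mult (G : {fset nat}) : nat :=
  (find (fun s => s \notin G) (iota 1 (fmax G).+1)).+1.

(* conductor: least s >= 1 with s + t \notin G for all t >= 0,
   i.e. max G + 1 (and 1 for the empty gapset) *)
Definition conductor (G : {fset nat}) : nat := (fmax G).+1.

Definition ceil_div (a b : nat) : nat := (a + b.-1) %/ b.

Definition depth (G : {fset nat}) : nat := ceil_div (conductor G) (mult G).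

Definition pure_sparse (k : nat) (G : {fset nat}) : Prop :=
  (forall i, 1 <= i -> i < genus G -> ell G i.+1 - ell G i <= k) /\
  (exists i, [/\ 1 <= i, i < genus G & ell G i.+1 - ell G i = k]).

Definition inGk (k g : nat) (G : {fset nat}) : Prop :=
  [/\ is_gapset G, genus G = g & pure_sparse k G].

Definition inGk_q3 (k g : nat) (G : {fset nat}) : Prop :=
  inGk k g G /\ depth G <= 3.

Definition inCk (k g : nat) (S : {fset nat}) : Prop :=
  [/\ (forall x, x \in S -> 1 <= x <= (2 * g).-1),
      #|` S| = g &
      \max_(1 <= i < g) (ell S i.+1 - ell S i) = k].

Definition is_mset (m : nat) (M : {fset nat}) : Prop :=
  0 \notin M /\
  (forall x, 1 <= x <= m.-1 -> x \in M) /\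
  (forall x, x \in M -> ~~ (m %| x)).

Definition mset_depth (m : nat) (M : {fset nat}) : nat := ceil_div (fmax M) m.

Definition alpha (k : nat) (G : {fset nat}) : nat :=
  \max_(1 <= i < genus G | ell G i.+1 - ell G i == k) i.

Definition sigma (k : nat) (G : {fset nat}) : {fset nat} :=
  [fset 1] `|` [fset ell G i + 1 | i in iota 1 (alpha k G)]
           `|` [fset ell G i + 2 | i in iota (alpha k G).+1 (genus G - alpha k G)].

(* Main.v *)
Require Import Defs.
From mathcomp Require Import all_boot all_order.
From mathcomp Require Import finmap.
From mathcomp Require Import zify.
Set Implicit Arguments. Unset Strict Implicit. Unset Printing Implicit Defensive.
Local Open Scope fset_scope.
Local Open Scope nat_scope.

Ltac normsz := repeat match goal with
 | H : context [@size (Choice.sort ?T) (@enum_fset ?T ?G)] |- _ =>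
     change (@size (Choice.sort T) (@enum_fset T G)) with (@size nat (@enum_fset T G)) in H
 | |- context [@size (Choice.sort ?T) (@enum_fset ?T ?G)] =>
     change (@size (Choice.sort T) (@enum_fset T G)) with (@size nat (@enum_fset T G))
 end.
Ltac glia := normsz; lia.

Lemma elts_mem (G : {fset nat}) x : (x \in elts G) = (x \in G).
Proof. by rewrite /elts mem_sort. Qed.

Lemma elts_size (G : {fset nat}) : size (elts G) = #|` G|.
Proof. by rewrite /elts size_sort. Qed.

Lemma elts_sorted (G : {fset nat}) : sorted ltn (elts G).
Proof.
rewrite ltn_sorted_uniq_leq sort_uniq fset_uniq /=.
by apply: sort_sorted; apply: leq_total.
Qed.

Lemma ltn_nth_sorted (s : seq nat) i j : sorted ltn s -> i < j -> j < size s ->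
  nth 0 s i < nth 0 s j.
Proof.
move=> ss ij js.
have := @sorted_ltn_nth _ ltn ltn_trans 0 s ss i j.
rewrite !inE; apply => //; exact: ltn_trans ij js.
Qed.

Lemma elts_eq (S : {fset nat}) (t : seq nat) : sorted ltn t ->
  (forall x, (x \in S) = (x \in t)) -> elts S = t.
Proof.
move=> st H; apply: (irr_sorted_eq ltn_trans ltnn) => //; first exact: elts_sorted.
by move=> x; rewrite elts_mem H.
Qed.
Lemma mem_sigma k G x : (x \in sigma k G) =
  [|| x == 1, has (fun i => x == ell G i + 1) (iota 1 (alpha k G)) |
      has (fun i => x == ell G i + 2) (iota (alpha k G).+1 (genus G - alpha k G))].
Proof.
rewrite /sigma !inE -orbA.
have -> : (x \in [fset ell G i + 1 | i in iota 1 (alpha k G)]) = has (fun i => x == ell G i + 1) (iota 1 (alpha k G)).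
  apply/imfsetP/hasP => [[i hi ->]|[i hi /eqP ->]]; by exists i.
have -> : (x \in [fset ell G i + 2 | i in iota (alpha k G).+1 (genus G - alpha k G)]) = has (fun i => x == ell G i + 2) (iota (alpha k G).+1 (genus G - alpha k G)).
  apply/imfsetP/hasP => [[i hi ->]|[i hi /eqP ->]]; by exists i.
by [].
Qed.

Lemma fmaxP (G : {fset nat}) x : x \in G -> x <= fmax G.
Proof. move=> h; rewrite /fmax; apply: (@leq_bigmax_seq _ _ xpredT (fun x => x)) => //. Qed.

Lemma fmax_mem (G : {fset nat}) : G != fset0 -> fmax G \in G.
Proof.
rewrite /fmax.
have : forall s : seq nat, s != [::] -> \max_(x <- s) x \in s.
  elim=> // a s IH _; rewrite big_cons.
  case: s IH => [|b s] IH; first by rewrite big_nil maxn0 inE.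
  have := IH isT; set M := \max_(_ <- _) _ => hM.
  rewrite /maxn; case: ifP => _; first by rewrite inE hM orbT.
  by rewrite inE eqxx.
move=> H hG; apply: H; apply: contra hG => /eqP h.
by apply/eqP/fsetP=> y; rewrite inE -[y \in G]/(y \in enum_fset G) h.
Qed.

Lemma count_sum (r : seq nat) (a : pred nat) : \sum_(i <- r) (a i : nat) = count a r.
Proof. by elim: r => [|x r IH]; rewrite ?big_nil ?big_cons ?IH. Qed.

Lemma card_ge (G : {fset nat}) (s : seq nat) : uniq s -> (forall x, x \in s -> x \in G) ->
  size s <= #|` G|.
Proof. move=> us h; apply: uniq_leq_size => // x /h; by []. Qed.

Lemma gap_one (G : {fset nat}) x : is_gapset G -> x \in G -> 1 \in G.
Proof.
case=> h0 hG; elim: x {-2}x (leqnn x) => [|N IH] x hx xG.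
  by move: hx xG; rewrite leqn0 => /eqP ->; rewrite (negbTE h0).
case: x hx xG => [|[|x]] hx xG; first by rewrite xG in h0.
  done.
have [] := hG x.+2 1 x.+1 xG isT isT erefl => // h.
apply: (IH x.+1) => //; lia.
Qed.

Lemma sum_pairs (G : {fset nat}) x : is_gapset G -> x \in G ->
  x.-1 <= 2 * count (mem G) (iota 1 x.-1).
Proof.
case=> h0 hG xG.
have x0 : 0 < x by case: x xG h0 => // ->.
have e1 : count (mem G) (iota 1 x.-1) = \sum_(1 <= i < x) ((i \in G) : nat).
  by rewrite -count_sum /index_iota subn1.
have e2 : \sum_(1 <= i < x) ((i \in G) : nat) = \sum_(1 <= i < x) ((x - i \in G) : nat).
  rewrite big_nat_rev /=; apply: eq_big_nat => i /andP[h1 h2].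
  by rewrite add1n subSS.
have e3 : x.-1 = \sum_(1 <= i < x) 1 by rewrite sum_nat_const_nat; lia.
rewrite e1 mul2n -addnn {2}e2 -big_split /= e3.
rewrite big_nat_cond [X in _ <= X]big_nat_cond; apply: leq_sum => i /andP[/andP[h1 h2] _].
have [] := hG x i (x - i) xG _ _ _; try lia.
  by move=> ->.
by move=> ->; rewrite addn1.
Qed.

Lemma gap_bound (G : {fset nat}) x : is_gapset G -> x \in G -> x < 2 * #|` G|.
Proof.
move=> gG xG; have := sum_pairs gG xG.
have : size (x :: filter (mem G) (iota 1 x.-1)) <= #|` G|.
  apply: card_ge.
    rewrite /= filter_uniq ?iota_uniq // andbT mem_filter mem_iota negb_and.
    by apply/orP; right; lia.
  by move=> y; rewrite inE mem_filter => /orP[/eqP ->|/andP[]].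
rewrite /= size_filter.
case: gG => h0 _; have : 0 < x by case: x xG h0 => // ->.
lia.
Qed.

Lemma mult_notin (G : {fset nat}) : mult G \notin G.
Proof.
rewrite /mult; set p := (fun s => s \notin G); set r := iota 1 (fmax G).+1.
have hh : has p r.
  apply/hasP; exists (fmax G).+1; first by rewrite mem_iota; lia.
  by rewrite /p; apply/negP => /fmaxP; lia.
have := nth_find 0 hh; rewrite /r nth_iota ?add1n //.
by move: hh; rewrite has_find size_iota.
Qed.

Lemma mult_in (G : {fset nat}) y : 0 < y -> y < mult G -> y \in G.
Proof.
move=> y0 ym; rewrite /mult in ym.
have := before_find 0 (_ : y.-1 < find (fun s => s \notin G) (iota 1 (fmax G).+1)).
move=> /(_ ltac:(lia)).
rewrite nth_iota; last first.
  have := find_size (fun s => s \notin G) (iota 1 (fmax G).+1); rewrite size_iota; lia.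
by rewrite (_ : 1 + y.-1 = y); [move/negbFE|lia].
Qed.

Lemma mult_pos (G : {fset nat}) : 0 < mult G.
Proof. by []. Qed.

Lemma twom_notin (G : {fset nat}) : is_gapset G -> (mult G).*2 \notin G.
Proof.
case=> _ h; apply/negP => /h /(_ (mult_pos G) (mult_pos G)).
by rewrite -addnn => /(_ erefl) [] hm; have := mult_notin G; rewrite hm.
Qed.

Definition ll (G : {fset nat}) i := nth 0 (elts G) i.

Lemma ll_mem G i : i < #|` G| -> ll G i \in G.
Proof. by move=> h; rewrite -elts_mem mem_nth // elts_size. Qed.

Lemma ll_index G x : x \in G -> exists2 i, i < #|` G| & ll G i = x.
Proof.
rewrite -elts_mem => h; exists (index x (elts G)); last exact: nth_index.
by rewrite -elts_size index_mem.
Qed.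

Lemma ll_lt G i j : i < j -> j < #|` G| -> ll G i < ll G j.
Proof. by move=> ij jg; apply: ltn_nth_sorted; rewrite ?elts_size //; exact: elts_sorted. Qed.

Lemma ll_le G i j : i <= j -> j < #|` G| -> ll G i <= ll G j.
Proof. by rewrite leq_eqVlt => /orP[/eqP ->//|ij] jg; apply/ltnW/ll_lt. Qed.

Lemma ll_inj G i j : i < #|` G| -> j < #|` G| -> ll G i = ll G j -> i = j.
Proof.
move=> ig jg e; case: (ltngtP i j) => // h.
  by have := ll_lt h jg; rewrite e ltnn.
by have := ll_lt h ig; rewrite e ltnn.
Qed.

Lemma ll_pos G i : is_gapset G -> i < #|` G| -> 0 < ll G i.
Proof.
case=> h0 _ ig; have := ll_mem ig; case: (ll G i) => // h.
by rewrite h in h0.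
Qed.

Lemma ell_ll G i : ell G i = ll G i.-1.
Proof. by []. Qed.

Lemma ll_eq G1 G2 : #|` G1| = #|` G2| -> (forall i, i < #|` G1| -> ll G1 i = ll G2 i) -> G1 = G2.
Proof.
move=> e h; have : elts G1 = elts G2.
  by apply: (@eq_from_nth _ 0); rewrite ?elts_size // => i; rewrite elts_size => /h.
by move=> e2; apply/fsetP => x; rewrite -!elts_mem e2.
Qed.

Lemma max_attained (r : seq nat) (P : pred nat) : has P r ->
  (\max_(i <- r | P i) i) \in r /\ P (\max_(i <- r | P i) i).
Proof.
elim: r => // x r IH /=; rewrite big_cons.
case: (boolP (has P r)) => hr.
  move=> _; have [h1 h2] := IH hr; set M := \max_(_ <- r | _) _ in h1 h2 *.
  case: ifP => Px; last by rewrite inE h1 orbT.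
  rewrite /maxn; case: ifP => _; first by rewrite inE h1 orbT.
  by rewrite inE eqxx.
rewrite orbF => Px; rewrite Px.
rewrite big1_seq ?maxn0 ?inE ?eqxx //.
by move=> i /andP[Pi ir]; move/hasPn: hr => /(_ i ir); rewrite Pi.
Qed.

Lemma sparse_le k G i : pure_sparse k G -> 0 < i -> i < #|` G| -> ll G i - ll G i.-1 <= k.
Proof. by case=> h _ i0 ig; have := h i i0 ig. Qed.

Lemma alpha_spec k G : pure_sparse k G ->
  [/\ 0 < alpha k G, alpha k G < #|` G|, ll G (alpha k G) - ll G (alpha k G).-1 = k &
      forall i, 0 < i -> i < #|` G| -> ll G i - ll G i.-1 = k -> i <= alpha k G].
Proof.
case=> _ [i0 [h1 h2 h3]].
set P := fun i => ell G i.+1 - ell G i == k.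
have hP : has P (index_iota 1 (genus G)).
  by apply/hasP; exists i0; rewrite ?mem_index_iota ?h1 ?h2 // /P h3.
have [ha hb] := max_attained hP.
rewrite /alpha -/P; move: ha hb; set A := \max_(_ <- _ | _) _.
rewrite mem_index_iota => /andP[a1 a2] /eqP hA.
split => //.
move=> i ip ig e; rewrite /A; apply: (@leq_bigmax_seq _ _ P (fun i => i)).
  by rewrite mem_index_iota ip.
by rewrite /P e.
Qed.

Definition fsig k G j := if j is j'.+1 then ll G j' + (if j' < alpha k G then 1 else 2) else 1.
Definition tsig k G := mkseq (fsig k G) (#|` G|).+1.

Lemma mem_tsig k G x : (x \in tsig k G) = has (fun j => x == fsig k G j) (iota 0 (#|` G|).+1).
Proof.
apply/mapP/hasP => [[j hj ->]|[j hj /eqP ->]]; by exists j.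
Qed.

Lemma mem_sigma_t k G : pure_sparse k G -> forall x, (x \in sigma k G) = (x \in tsig k G).
Proof.
move=> ps x; have [a0 ag _ _] := alpha_spec ps.
rewrite mem_sigma mem_tsig /genus.
apply/idP/idP.
  case/or3P.
  - by move=> h; apply/hasP; exists 0; rewrite ?mem_iota.
  - case/hasP => i; rewrite mem_iota => hi /eqP ->; apply/hasP; exists i.
      by rewrite mem_iota; glia.
    case: i hi => [|i] hi; first lia.
    by rewrite /= ell_ll /= ifT //; glia.
  - case/hasP => i; rewrite mem_iota => hi /eqP ->; apply/hasP; exists i.
      by rewrite mem_iota; glia.
    case: i hi => [|i] hi; first lia.
    by rewrite /= ell_ll /= ifF //; glia.
case/hasP => j; rewrite mem_iota => hj /eqP ->.
case: j hj => [|j] hj; first by rewrite eqxx.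
rewrite /=; case: ifP => h.
  apply/orP; right; apply/orP; left; apply/hasP; exists j.+1; last by rewrite ell_ll.
  by rewrite mem_iota; glia.
apply/orP; right; apply/orP; right; apply/hasP; exists j.+1; last by rewrite ell_ll.
rewrite mem_iota; move/negbT: h; rewrite -leqNgt => h; glia.
Qed.

Lemma sorted_map_iota (f : nat -> nat) a N :
  (forall j, a <= j -> j.+1 < a + N -> f j < f j.+1) -> sorted ltn (map f (iota a N)).
Proof.
elim: N a => // N IH a h; rewrite /=.
case: N IH h => // N IH h.
rewrite /= in IH *; apply/andP; split.
  by apply: h; glia.
by apply: (IH a.+1) => j h1 h2; apply: h; glia.
Qed.

Lemma tsig_sorted k G : is_gapset G -> pure_sparse k G -> sorted ltn (tsig k G).
Proof.
move=> gG ps; apply: sorted_map_iota => j _ hj.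
case: j hj => [|j] hj /=.
  have := @ll_pos G 0 gG; case: ifP; glia.
have := @ll_lt G j j.+1 (ltnSn _); have : j.+1 < #|` G| by lia.
move=> h1 /(_ h1); case: ifP; case: ifP; glia.
Qed.

Lemma elts_sigma k G : is_gapset G -> pure_sparse k G -> elts (sigma k G) = tsig k G.
Proof.
move=> gG ps; apply: elts_eq; first exact: tsig_sorted.
exact: mem_sigma_t.
Qed.

Lemma card_sigma k G : is_gapset G -> pure_sparse k G -> #|` sigma k G| = (#|` G|).+1.
Proof. by move=> gG ps; rewrite -elts_size elts_sigma // size_mkseq. Qed.

Lemma ll_sigma k G j : is_gapset G -> pure_sparse k G -> j <= #|` G| -> ll (sigma k G) j = fsig k G j.
Proof. by move=> gG ps hj; rewrite /ll elts_sigma // nth_mkseq. Qed.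

Lemma ll0 G : is_gapset G -> 0 < #|` G| -> ll G 0 = 1.
Proof.
move=> gG g0; have := ll_mem g0 => /(gap_one gG) /ll_index [j jg ej].
have := @ll_le G 0 j isT jg; have := @ll_pos G 0 gG g0; rewrite ej; lia.
Qed.

Lemma fsig_diff k G i : is_gapset G -> pure_sparse k G -> 0 < k -> 0 < i -> i <= #|` G| ->
  fsig k G i - fsig k G i.-1 = (if i == (alpha k G).+1 then k.+1 else fsig k G i - fsig k G i.-1) /\
  (i != (alpha k G).+1 -> fsig k G i - fsig k G i.-1 <= k).
Proof.
move=> gG ps k0 i0 ig; have [a0 ag aE aM] := alpha_spec ps.
case: i i0 ig => // i _ ig.
case: i ig => [|i] ig.
  rewrite /= ifT //= ll0 //.
  have -> : (1 == (alpha k G).+1) = false by apply/eqP; lia.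
  by split => // _; lia.
rewrite /fsig /=.
have hs := @sparse_le k G i.+1 ps isT ig.
have hl := @ll_lt G i i.+1 (ltnSn _) ig.
rewrite /= in hs.
case: (ltngtP i.+1 (alpha k G)) => h.
-   have -> : (i.+2 == (alpha k G).+1) = false by apply/eqP; lia.
  by split => // _; lia.
- have -> : (i.+2 == (alpha k G).+1) = false by apply/eqP; lia.
  by split => // _; lia.
- rewrite -h eqxx; split => //.
  by move: aE; rewrite -h /=; lia.
Qed.

Lemma part1 k G : is_gapset G -> pure_sparse k G -> 0 < k -> inCk k.+1 (#|` G|).+1 (sigma k G).
Proof.
move=> gG ps k0; have [a0 ag aE aM] := alpha_spec ps.
split.
- move=> x; rewrite mem_sigma_t // mem_tsig => /hasP [j]; rewrite mem_iota => hj /eqP ->.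
  rewrite /fsig; case: j hj => [|j] hj; first by glia.
  have jg : j < #|` G| by glia.
  have := gap_bound gG (ll_mem jg); have := ll_pos gG jg.
  case: ifP => _; glia.
- exact: card_sigma.
- have e : forall i, 0 < i -> i <= #|` G| ->
      ell (sigma k G) i.+1 - ell (sigma k G) i = fsig k G i - fsig k G i.-1.
    by move=> i i0 ig; rewrite !ell_ll !ll_sigma //; lia.
  apply/eqP; rewrite eqn_leq; apply/andP; split.
    apply/bigmax_leqP_seq => i; rewrite mem_index_iota => /andP[i0 ig] _.
    have ig' : i <= #|` G| by glia.
    rewrite e //; have [h1 h2] := fsig_diff gG ps k0 i0 ig'.
    by case: (boolP (i == (alpha k G).+1)) => hi; [rewrite h1 hi | move: (h2 hi); lia].
  have hA : (alpha k G).+1 <= #|` G| by glia.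
  have := fsig_diff gG ps k0 (isT : 0 < (alpha k G).+1) hA; rewrite eqxx => -[h1 _].
  rewrite -h1 -e //; apply: (@leq_bigmax_seq _ _ xpredT (fun i => ell (sigma k G) i.+1 - ell (sigma k G) i)) => //.
  rewrite mem_index_iota; glia.
Qed.

Lemma part2 k G1 G2 : is_gapset G1 -> pure_sparse k G1 -> is_gapset G2 -> pure_sparse k G2 -> 0 < k ->
  #|` G1| = #|` G2| -> sigma k G1 = sigma k G2 -> G1 = G2.
Proof.
move=> g1 p1 g2 p2 k0 eg es.
have et : forall j, j <= #|` G1| -> fsig k G1 j = fsig k G2 j.
  by move=> j hj; rewrite -!ll_sigma // -?eg // es.
have [a10 a1g a1E a1M] := alpha_spec p1.
have [a20 a2g a2E a2M] := alpha_spec p2.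
have key : forall G G', is_gapset G -> pure_sparse k G -> is_gapset G' -> pure_sparse k G' ->
    #|` G| = #|` G'| -> (forall j, j <= #|` G| -> fsig k G j = fsig k G' j) ->
    alpha k G <= alpha k G'.
  move=> G G' gG pG gG' pG' e et'; rewrite leqNgt; apply/negP => lt.
  have [a0 ag _ _] := alpha_spec pG.
  have [a0' ag' _ _] := alpha_spec pG'.
  have hA : (alpha k G').+1 <= #|` G'| by glia.
  have [h1 _] := fsig_diff gG' pG' k0 (isT : 0 < (alpha k G').+1) hA.
  have hA2 : (alpha k G').+1 <= #|` G| by glia.
  have [_ h2] := fsig_diff gG pG k0 (isT : 0 < (alpha k G').+1) hA2.
  have ne : (alpha k G').+1 != (alpha k G).+1 by apply/eqP; lia.
  have h3 := h2 ne; rewrite eqxx in h1; rewrite !succnK in h1 h3.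
  rewrite (et' (alpha k G').+1) ?(et' (alpha k G')) in h3; try glia.
have ea : alpha k G1 = alpha k G2.
  apply/eqP; rewrite eqn_leq (key G1 G2) // (key G2 G1) //.
  by move=> j hj; rewrite et // eg.
apply: ll_eq => // j jg.
have := et j.+1 jg; rewrite /= ea; case: ifP => _; lia.
Qed.

Lemma sum_pairs_gen (G : {fset nat}) v a : is_gapset G -> v \in G -> 0 < a -> a + a <= v ->
  v.+1 - (a + a) <= 2 * count (mem G) (iota a (v.+1 - (a + a))).
Proof.
case=> h0 hG xG a0 av.
have e1 : count (mem G) (iota a (v.+1 - (a + a))) = \sum_(a <= i < v.+1 - a) ((i \in G) : nat).
  by rewrite -count_sum /index_iota; have -> : v.+1 - a - a = v.+1 - (a + a) by lia.
have e2 : \sum_(a <= i < v.+1 - a) ((i \in G) : nat) = \sum_(a <= i < v.+1 - a) ((v - i \in G) : nat).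
  rewrite big_nat_rev /=; apply: eq_big_nat => i /andP[h1 h2].
  have -> // : a + (v.+1 - a) - i.+1 = v - i by lia.
have e3 : v.+1 - (a + a) = \sum_(a <= i < v.+1 - a) 1 by rewrite sum_nat_const_nat; lia.
rewrite e1 mul2n -addnn {2}e2 -big_split /= e3.
rewrite big_nat_cond [X in _ <= X]big_nat_cond; apply: leq_sum => i /andP[/andP[h1 h2] _].
have [] := hG v i (v - i) xG _ _ _; try lia.
  by move=> ->.
by move=> ->; rewrite addn1.
Qed.

Lemma count_contra G n u v : is_gapset G -> 0 < n -> #|` G| = 3 * n + 1 -> u \in G -> v \in G ->
  v = u + 2 * n -> (mult G).*2 < u -> v < 3 * mult G -> False.
Proof.
move=> gG n0 eg uG vG evu hu hv.
have hin : forall y, 0 < y -> y < mult G -> y \in G := @mult_in G.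
have m0 : 0 < mult G := mult_pos G.
set m := mult G in hu hv hin m0; clearbody m.
have hp := sum_pairs_gen gG vG (isT : 0 < m.+1) (_ : m.+1 + m.+1 <= v).
have := hp ltac:(lia); set c := count _ _ => hc.
set L := v.+1 - (m.+1 + m.+1) in c hc.
have : size (iota 1 m.-1 ++ filter (mem G) (iota m.+1 L) ++ [:: u; v]) <= #|` G|.
  apply: card_ge.
    rewrite cat_uniq; apply/and3P; split; first exact: iota_uniq.
      apply/hasPn => y; rewrite mem_cat mem_filter !mem_iota !inE => /orP[/andP[_ hy]|/orP[]/eqP ->]; lia.
    rewrite cat_uniq; apply/and3P; split; first by rewrite filter_uniq ?iota_uniq.
      apply/hasPn => y; rewrite !inE mem_filter mem_iota => /orP[]/eqP -> ; apply/negP => /andP[_]; lia.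
    by rewrite /= inE andbT; apply/eqP; lia.
  move=> y; rewrite !mem_cat mem_filter mem_iota !inE => /orP[hy|/orP[/andP[]//|/orP[]/eqP->//]].
  by apply: hin; lia.
rewrite !size_cat size_iota size_filter -/c /=.
glia.
Qed.

Lemma prefix (G : {fset nat}) i : is_gapset G -> i.+1 < mult G -> i < #|` G| /\ ll G i = i.+1.
Proof.
move=> gG; elim: i {-2}i (leqnn i) => [|N IH] i hi him.
  have -> : i = 0 by lia.
  have /ll_index [j jg ej] := @mult_in G 1 isT ltac:(lia).
  have g0 : 0 < #|` G| by glia.
  split => //; have := @ll_le G 0 j isT jg; have := @ll_pos G 0 gG g0; lia.
have /ll_index [j jg ej] := @mult_in G i.+1 isT him.
case: (ltngtP j i) => h.
- have [_ e] := IH j ltac:(lia) ltac:(lia); lia.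
- have ig : i < #|` G| by glia.
  have := @ll_lt G i j h jg; rewrite ej => hl.
  case: i hi him h ig hl {ej} => [|i] hi him h ig hl.
    have := @ll_pos G 0 gG ig; lia.
  have [_ e] := IH i ltac:(lia) ltac:(lia).
  have := @ll_lt G i i.+1 (ltnSn _) ig; lia.
- by subst j.
Qed.

Lemma fmax_ll (G : {fset nat}) : 0 < #|` G| -> fmax G = ll G (#|` G|).-1.
Proof.
move=> g0; have ne : G != fset0.
  by apply/negP => /eqP e; move: g0; rewrite e.
have /ll_index [j jg ej] := fmax_mem ne.
have h1 : (#|` G|).-1 < #|` G| by glia.
have := fmaxP (ll_mem h1); have := @ll_le G j (#|` G|).-1 ltac:(glia) h1; lia.
Qed.

Lemma alpha_ge k (G : {fset nat}) : is_gapset G -> pure_sparse k G -> 1 < k -> mult G <= (alpha k G).+1.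
Proof.
move=> gG ps k1; have [a0 ag aE _] := alpha_spec ps.
rewrite leqNgt; apply/negP => h.
have [_ e1] := prefix gG h.
have [_ e2] := @prefix G (alpha k G).-1 gG ltac:(lia).
move: aE; rewrite e1 e2; lia.
Qed.

Lemma divq X d q : 0 < d -> q * d <= X -> X < q.+1 * d -> X %/ d = q.
Proof.
move=> d0 h1 h2; apply/eqP; rewrite eqn_leq -ltnS ltn_divLR // h2 /=.
by rewrite leq_divRL.
Qed.

Lemma divq_inv X d q : 0 < d -> X %/ d = q -> q * d <= X /\ X < q.+1 * d.
Proof.
move=> d0 e; split; first by rewrite -e leq_trunc_div.
by rewrite -e ltn_ceil.
Qed.

Lemma part34 n (G : {fset nat}) q : 0 < n -> inGk (2 * n) (3 * n + 1) G -> depth G = q -> 2 <= q <= 3 ->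
  is_mset (mult G + 1) (sigma (2 * n) G) /\ mset_depth (mult G + 1) (sigma (2 * n) G) = q.
Proof.
move=> n0 [gG eg ps] dq hq.
rewrite /genus in eg.
have [a0 ag aE aM] := alpha_spec ps.
have k1 : 1 < 2 * n by lia.
have aG := alpha_ge gG ps k1.
have m0 := mult_pos G.
have mnot := mult_notin G.
have m2not := twom_notin gG.
have g0 : 0 < #|` G| by glia.
have eF := fmax_ll g0.
have hg1 : (#|` G|).-1 < #|` G| by glia.
have FG : fmax G \in G by rewrite eF; exact: ll_mem.
move: dq; rewrite /depth /conductor /ceil_div => /(divq_inv m0) [d1 d2].
set m := mult G in aG m0 mnot m2not d1 d2 *.
set F := fmax G in eF FG d1 d2 *.
set A := alpha (2 * n) G in a0 ag aE aM aG *.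
have hF2 : q = 3 -> 2 * m < F.
  move=> q3; subst q; rewrite ltn_neqAle; apply/andP; split; last by lia.
  by apply/negP => /eqP e; move: m2not; rewrite -mul2n e FG.
have memS : forall x, x \in sigma (2 * n) G ->
    exists2 j, j <= #|` G| & x = fsig (2 * n) G j.
  move=> x; rewrite mem_sigma_t // mem_tsig => /hasP [j]; rewrite mem_iota => hj /eqP ->.
  by exists j => //; lia.
have fbound : forall j, j <= #|` G| -> 0 < fsig (2 * n) G j <= F + 2.
  move=> j hj; case: j hj => [|j] hj; rewrite /fsig //; first by lia.
  have jg : j < #|` G| by glia.
  have := ll_pos gG jg; have := @ll_le G j (#|` G|).-1 ltac:(glia) hg1.
  rewrite -eF -/A; case: ifP => _; lia.
have fS : forall j, j <= #|` G| -> fsig (2 * n) G j \in sigma (2 * n) G.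
  move=> j hj; rewrite mem_sigma_t // mem_tsig; apply/hasP; exists j => //.
  by rewrite mem_iota; lia.
have fmaxS : fmax (sigma (2 * n) G) = F + 2.
  rewrite fmax_ll card_sigma // succnK ll_sigma // /fsig.
  case: (#|` G|) g0 hg1 eF ag => // g' _ _ eF' ag'.
  by rewrite -/A ifF ?eF' //; lia.
split; last first.
  rewrite /mset_depth /ceil_div fmaxS addn1 succnK.
  have [q2|q3] : q = 2 \/ q = 3 by lia.
    by subst q; apply: divq => //; lia.
  by have := hF2 q3; subst q => h; apply: divq => //; lia.
split.
  by apply/negP => /memS [j hj e]; have := fbound j hj; rewrite -e.
split.
  move=> x; rewrite addn1 succnK => /andP[x1 xm].
  case: x x1 xm => // [[|x]] _ xm; first by apply: (fS 0).
  have [_ ex] := @prefix G x gG ltac:(lia).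
  have -> : x.+2 = fsig (2 * n) G x.+1 by rewrite /fsig -/A ex ifT //; lia.
  by apply: fS; have := (@prefix G x gG ltac:(lia)).1; lia.
move=> x /memS [j hj ->]; apply/negP => /dvdnP [t et].
have fb := fbound j hj.
have Fq : F < 3 * m.
  have [q2|q3] : q = 2 \/ q = 3 by lia.
    by subst q; lia.
  by subst q; lia.
have jg : forall j', j = j'.+1 -> j' < #|` G| by move=> j' e; subst j; glia.
case: t et => [|[|[|t]]] et.
- by move: fb; rewrite et.
- case: j hj fb jg et => [|j] hj fb jg et.
    by move: et; rewrite /fsig; lia.
  have jg' := jg j erefl.
  move: et; rewrite /fsig -/A; case: ifP => hjA et.
    have e : ll G j = m by lia.
    by move: mnot; rewrite -e ll_mem.
  have := ll_pos gG jg'; move=> lp.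
  have [mg e2] := @prefix G (m.-2) gG ltac:(lia).
  have e3 : ll G j = ll G m.-2 by rewrite e2; lia.
  have := ll_inj jg' mg e3; move/negbT: hjA; lia.
- case: j hj fb jg et => [|j] hj fb jg et.
    by move: et; rewrite /fsig; lia.
  have jg' := jg j erefl.
  move: et; rewrite /fsig -/A; case: ifP => hjA et.
    have hu := @ll_le G j A.-1 ltac:(lia) ltac:(glia).
    have hl := @ll_lt G A.-1 A ltac:(lia) ag.
    have hv := @ll_le G A (#|` G|).-1 ltac:(glia) hg1.
    apply: (count_contra gG n0 eg (ll_mem (_ : A.-1 < #|` G|)) (ll_mem ag)); try glia.
  have e : ll G j = m.*2 by lia.
  by move: m2not; rewrite -e ll_mem.
- by move: fb; rewrite et !mulSn; lia.
Qed.

Theorem mainTheorem3 (n : nat) : 0 < n ->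
  let g := 3 * n + 1 in
  (forall G, inGk_q3 (2 * n) g G -> inCk (2 * n + 1) (g + 1) (sigma (2 * n) G)) /\
  (forall G1 G2, inGk_q3 (2 * n) g G1 -> inGk_q3 (2 * n) g G2 ->
     sigma (2 * n) G1 = sigma (2 * n) G2 -> G1 = G2) /\
  (forall G, inGk (2 * n) g G -> depth G = 2 ->
     is_mset (mult G + 1) (sigma (2 * n) G) /\
     mset_depth (mult G + 1) (sigma (2 * n) G) = 2) /\
  (forall G, inGk (2 * n) g G -> depth G = 3 ->
     is_mset (mult G + 1) (sigma (2 * n) G) /\
     mset_depth (mult G + 1) (sigma (2 * n) G) = 3).
Proof.
move=> n0 g; have k0 : 0 < 2 * n by lia.
split; [|split; [|split]].
- move=> G [[gG eg ps] _]; rewrite /genus in eg.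
  have := part1 gG ps k0; by rewrite eg !addn1.
- move=> G1 G2 [[g1 e1 p1] _] [[g2 e2 p2] _] es.
  apply: (part2 g1 p1 g2 p2 k0) => //.
  by rewrite /genus in e1 e2; rewrite e1 e2.
- by move=> G hG d2; apply: (part34 n0 hG d2).
- by move=> G hG d3; apply: (part34 n0 hG d3).
Qed.
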